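(* With $f$ as in the context (and $n\ge 3$), $\langle v_0\rangle=\{x\in V : x\wedge V\subseteq Vf\}$.
   Context: Let $p$ be a prime, $\mathbb{F}=\mathrm{GF}(p)$, and $n\ge 3$. Let $V$ be an $\mathbb{F}$-vector space with basis $v_0,\dots,v_n$, $U=\langle v_1,\dots,v_n\rangle$, $W=\Lambda^2V$, and for $x\in V$, $x\wedge V=\{x\wedge y:y\in V\}$. Maps are written on the right. The linear map $f:V\to W$ is given by $v_0f=\sum_{i=1}^n b_i\, v_0\wedge v_i+\sum_{1\le j<k\le n}c_{j,k}\, v_j\wedge v_k$ and $v_if=\sum_{j=1}^n A_{i,j}\, v_0\wedge v_j$ for $1\le i\le n$, where $b\in\mathbb{F}^n$ and $c=(c_{j,k})\in\mathbb{F}^{\binom n2}$ are nonzero, and $A$ is the $n\times n$ companion matrix of the minimal polynomial over $\mathbb{F}$ of a primitive element of $\mathrm{GF}(p^n)$. *)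

(* Defs.v *)
From HB Require Import structures.
From mathcomp Require Import all_boot all_order all_algebra all_field.
Set Implicit Arguments. Unset Strict Implicit. Unset Printing Implicit Defensive.
Import GRing.Theory.
Local Open Scope ring_scope.

(* The n x n companion matrix of q (row convention, as mathcomp's
   [companionmx]: row i is e_(i+1) for i < n-1, last row is -coeffs of q).
   For size q = n.+1 this is exactly [companionmx q]. *)
Definition companion (F : nzRingType) (n : nat) (q : {poly F}) : 'M[F]_n :=
  \matrix_(i < n, j < n)
    if (i == n.-1 :> nat) then - q`_j else (i.+1 == j :> nat)%:R.

Definition is_minpoly (F : fieldType) (L : fieldExtType F) (z : L)
    (q : {poly F}) : Prop :=
  [/\ q \is monic, root (map_poly (in_alg L) q) z &
      forall r : {poly F}, root (map_poly (in_alg L) r) z -> q %| r].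

Definition primitive_elt (F : fieldType) (L : fieldExtType F) (z : L) : Prop :=
  forall y : L, y != 0 -> exists k : nat, y = z ^+ k.

(* V = F^(n+1) as row vectors; index 0 is v_0, index (lift ord0 i) is v_(i+1). *)
Definition basis_v (F : nzRingType) (m : nat) (i : 'I_m) : 'rV[F]_m :=
  delta_mx 0 i.
Definition v0 (F : nzRingType) (n : nat) : 'rV[F]_n.+1 := basis_v F ord0.
Definition vU (F : nzRingType) (n : nat) (i : 'I_n) : 'rV[F]_n.+1 :=
  basis_v F (lift ord0 i).

(* Concrete model of Lambda^2 V: alternating (n+1)x(n+1) matrices,
   x /\ y := x^T y - y^T x  (so v_i /\ v_j = E_ij - E_ji). *)
Definition wedge (F : comNzRingType) (m : nat) (x y : 'rV[F]_m) : 'M[F]_m :=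
  x^T *m y - y^T *m x.

(* The linear map f : V -> W of the context, with b = (b_1..b_n),
   c_(j,k) = c j k for j < k (entries with j >= k are ignored), A the n x n
   matrix: v_0 f = sum b_i v0/\v_i + sum_(j<k) c_jk v_j/\v_k,
   v_i f = sum_j A_ij v0/\v_j. *)
Definition fv0 (F : comNzRingType) (n : nat) (b : 'rV[F]_n) (c : 'M[F]_n)
  : 'M[F]_n.+1 :=
  \sum_(i < n) b 0 i *: wedge (v0 F n) (vU F i)
  + \sum_(j < n) \sum_(k < n | (j < k)%N) c j k *: wedge (vU F j) (vU F k).

Definition fvi (F : comNzRingType) (n : nat) (A : 'M[F]_n) (i : 'I_n)
  : 'M[F]_n.+1 :=
  \sum_(j < n) A i j *: wedge (v0 F n) (vU F j).

Definition fmap (F : comNzRingType) (n : nat) (b : 'rV[F]_n) (c : 'M[F]_n)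
  (A : 'M[F]_n) (x : 'rV[F]_n.+1) : 'M[F]_n.+1 :=
  x 0 ord0 *: fv0 b c + \sum_(i < n) x 0 (lift ord0 i) *: fvi A i.

(* Main.v *)
Require Import Defs.
From HB Require Import structures.
From mathcomp Require Import all_boot all_order all_algebra all_field.
From mathcomp Require Import ring.
Import GRing.Theory.
Local Open Scope ring_scope.

Lemma z_neq0 (F : fieldType) (L : fieldExtType F) (z : L) :
  (1 < \dim {:L})%N -> primitive_elt z -> z != 0.
Proof.
move=> dimL prim; apply/negP => /eqP z0.
have sub : ({:L} <= <[1 : L]>)%VS.
  apply/subvP => y _.
  have [->|ny] := eqVneq y 0; first exact: mem0v.
  have [k ->] := prim y ny.
  rewrite z0; case: k => [|k]; first by rewrite expr0 memv_line.
  by rewrite expr0n mem0v.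
have := dimvS sub; rewrite dim_vline oner_neq0.
by rewrite leqNgt dimL.
Qed.

Lemma q0_neq0 (F : fieldType) (L : fieldExtType F) (z : L) (q : {poly F}) :
  z != 0 -> is_minpoly z q -> q`_0 != 0.
Proof.
move=> nz [mq rq dq]; apply/negP => /eqP q00.
have : root q 0 by rewrite /root horner_coef0 q00.
rewrite root_factor_theorem subr0 => dX.
set r := q %/ 'X.
have qE : q = r * 'X by rewrite divpK.
have rr : root (map_poly (in_alg L) r) z.
  move: rq; rewrite qE rmorphM /= map_polyX /root hornerM hornerX.
  by rewrite mulf_eq0 (negPf nz) orbF.
have qn0 := monic_neq0 mq.
have rn0 : r != 0 by apply: contraNneq qn0 => r0; rewrite qE r0 mul0r.
have := dvdp_leq rn0 (dq _ rr).
rewrite qE size_mul // ?polyX_eq0 // size_polyX addn2 /=.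
by case: (size r) => [|s]; rewrite /= ?ltnn // ltnn.
Qed.

Lemma companion_inj (F : fieldType) (n : nat) (q : {poly F}) (u : 'rV[F]_n) :
  q`_0 != 0 -> u *m companion n q = 0 -> u = 0.
Proof.
move=> q0 uA.
case: n u uA => [|n] u uA; first by apply/rowP => -[].
have E (j : 'I_n.+1) : \sum_(i < n.+1) u 0 i * (if (i == n :> nat) then - q`_j
                   else (i.+1 == j :> nat)%:R) = 0.
  have := congr1 (fun M : 'rV_n.+1 => M 0 j) uA.
  rewrite !mxE /= => H; apply: etrans H; by apply: eq_bigr => i _; rewrite mxE.
have un : u 0 ord_max = 0.
  have := E ord0; rewrite (bigD1 ord_max) //= eqxx big1 ?addr0.
    by move/eqP; rewrite mulf_eq0 oppr_eq0 (negPf q0) orbF => /eqP.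
  move=> i /negPf; rewrite -(inj_eq val_inj) /= => ->; by rewrite mulr0.
apply/rowP => i; rewrite mxE.
case: (ltnP i n) => [lt|ge]; last first.
  have -> : i = ord_max by apply/val_inj/eqP; rewrite /= eqn_leq ge -ltnS ltn_ord.
  by [].
have := E (inord i.+1); rewrite (bigD1 i) //= (ltn_eqF lt) inordK // eqxx mulr1.
rewrite big1 ?addr0 // => k ki.
case: ifP => kn.
  have -> : k = ord_max by apply/val_inj/eqP; exact: kn.
  by rewrite un mul0r.
by rewrite eqSS (inj_eq val_inj) (negPf ki) mulr0.
Qed.

Lemma companion_unit (F : fieldType) (n : nat) (q : {poly F}) :
  q`_0 != 0 -> companion n q \in unitmx.
Proof.
move=> q0; rewrite -row_free_unit -kermx_eq0; apply/eqP.
apply/row_matrixP => i; rewrite row0.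
apply: (@companion_inj F n q _ q0).
by rewrite -row_mul mulmx_ker row0.
Qed.

Section Aux.
Variable F : fieldType.

Lemma wedge_entry m (x y : 'rV[F]_m) a b :
  wedge x y a b = x 0 a * y 0 b - y 0 a * x 0 b.
Proof. by rewrite !mxE !big_ord1 !mxE. Qed.

Lemma wedgeD m (x y1 y2 : 'rV[F]_m) : wedge x (y1 + y2) = wedge x y1 + wedge x y2.
Proof. apply/matrixP => a b; rewrite wedge_entry [in RHS]mxE !wedge_entry !mxE; ring. Qed.

Lemma wedgeZ m (x y : 'rV[F]_m) k : wedge x (k *: y) = k *: wedge x y.
Proof. apply/matrixP => a b; rewrite wedge_entry [in RHS]mxE !wedge_entry !mxE; ring. Qed.

Lemma wedgeZl m (x y : 'rV[F]_m) k : wedge (k *: x) y = k *: wedge x y.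
Proof. apply/matrixP => a b; rewrite wedge_entry [in RHS]mxE !wedge_entry !mxE; ring. Qed.

Lemma wedge0 m (x : 'rV[F]_m) : wedge x 0 = 0.
Proof. apply/matrixP => a b; rewrite wedge_entry !mxE; ring. Qed.

Lemma wedgexx m (x : 'rV[F]_m) : wedge x x = 0.
Proof. apply/matrixP => a b; rewrite wedge_entry !mxE; ring. Qed.

Lemma wedge_sum m (x : 'rV[F]_m) I (r : seq I) (P : pred I) (G : I -> 'rV[F]_m) :
  wedge x (\sum_(i <- r | P i) G i) = \sum_(i <- r | P i) wedge x (G i).
Proof.
elim/big_rec2: _ => [|i y1 y2 _ <-]; first exact: wedge0.
exact: wedgeD.
Qed.

Lemma vU_entry n (i : 'I_n) j : vU F i 0 j = (j == lift ord0 i)%:R.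
Proof. by rewrite !mxE. Qed.

Lemma v0_lift n (j : 'I_n) : v0 F n 0 (lift ord0 j) = 0.
Proof. by rewrite !mxE. Qed.

Lemma fmap_entry n (b : 'rV[F]_n) c A w (a a' : 'I_n) :
  fmap b c A w (lift ord0 a) (lift ord0 a') =
  w 0 ord0 * fv0 b c (lift ord0 a) (lift ord0 a').
Proof.
rewrite /fmap [LHS]mxE [X in _ + X]summxE.
rewrite big1 ?addr0; first by rewrite mxE.
move=> i _.
rewrite mxE /fvi summxE big1 ?mulr0 // => j _.
by rewrite [LHS]mxE wedge_entry !v0_lift !mulr0 !mul0r subrr mulr0.
Qed.

End Aux.

Theorem lemma3p2 (p n : nat) (p_prime : prime p) (n_ge3 : (3 <= n)%N)
  (b : 'rV['F_p]_n) (c : 'M['F_p]_n)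
  (L : fieldExtType 'F_p) (z : L) (q : {poly 'F_p}) :
  b != 0 ->
  (exists j k : 'I_n, (j < k)%N /\ c j k != 0) ->
  \dim {:L} = n ->
  primitive_elt z ->
  is_minpoly z q ->
  forall x : 'rV['F_p]_n.+1,
    (exists a : 'F_p, x = a *: v0 'F_p n) <->
    (forall y : 'rV['F_p]_n.+1,
       exists w : 'rV['F_p]_n.+1, wedge x y = fmap b c (companion n q) w).
Proof.
move=> _ _ dimL prim mq x.
have nz : z != 0 by apply: z_neq0 prim; rewrite dimL (leq_trans _ n_ge3).
have q0 := @q0_neq0 _ _ _ _ nz mq.
set A := companion n q.
have uA : A \in unitmx by apply: companion_unit.
split.
- case=> a -> y.
  set yt := \row_(j < n) y 0 (lift ord0 j).
  set t := (a *: yt) *m invmx A.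
  exists (\row_(k < n.+1) if unlift ord0 k is Some i then t 0 i else 0).
  have wedge_v0 : wedge (v0 'F_p n) y =
      \sum_(j < n) y 0 (lift ord0 j) *: wedge (v0 'F_p n) (vU 'F_p j).
    rewrite {1}[y]matrix_sum_delta big_ord1 wedge_sum big_ord_recl.
    rewrite wedgeZ wedgexx scaler0 add0r.
    by apply: eq_bigr => j _; rewrite wedgeZ.
  have tA : t *m A = a *: yt by rewrite /t mulmxKV.
  rewrite wedgeZl wedge_v0 /fmap mxE unlift_none scale0r add0r.
  rewrite scaler_sumr.
  under [RHS]eq_bigr => i _ do rewrite mxE liftK /fvi scaler_sumr.
  rewrite exchange_big /=; apply: eq_bigr => j _.
  under eq_bigr => i _ do rewrite scalerA.
  rewrite -scaler_suml scalerA; congr (_ *: _).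
  have := congr1 (fun M : 'rV_n => M 0 j) tA; rewrite !mxE => <-.
  by apply: eq_bigr => i _.
- move=> H.
  have key : forall m i i' : 'I_n, i != m -> i' != m -> i != i' ->
      x 0 (lift ord0 m) = 0.
    move=> m i i' im i'm ii'.
    have [//|um] := eqVneq (x 0 (lift ord0 m)) 0.
    have mi : (m == i) = false by rewrite eq_sym (negPf im).
    have mi' : (m == i') = false by rewrite eq_sym (negPf i'm).
    have ii'f : (i == i') = false by rewrite (negPf ii').
    have i'i : (i' == i) = false by rewrite eq_sym (negPf ii').
    have [w1 E1] := H (vU 'F_p i).
    have [w2 E2] := H (vU 'F_p i').
    have e11 := congr1 (fun M : 'M_n.+1 => M (lift ord0 m) (lift ord0 i)) E1.
    have e12 := congr1 (fun M : 'M_n.+1 => M (lift ord0 m) (lift ord0 i')) E1.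
    have e22 := congr1 (fun M : 'M_n.+1 => M (lift ord0 m) (lift ord0 i')) E2.
    rewrite /= !fmap_entry !wedge_entry !vU_entry !(inj_eq (@lift_inj _ ord0))
      ?eqxx ?mi ?mi' ?ii'f ?i'i /= in e11 e12 e22.
    move: e11 e12 e22; rewrite ?mulr1 ?mulr0 ?mul0r ?subr0 => e11 e12 e22.
    move/eqP: e12; rewrite eq_sym mulf_eq0 => /orP [/eqP w0|/eqP K0].
      by move: um; rewrite e11 w0 mul0r eqxx.
    by move: um; rewrite e22 K0 mulr0 eqxx.
  have Hu : forall m : 'I_n, x 0 (lift ord0 m) = 0.
    move=> m.
    have h1 : (1 < n)%N by apply: leq_trans n_ge3.
    have h2 : (2 < n)%N by [].
    have hi : ((if m == 0 :> nat then 1 else 0) < n)%N.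
      by case: ifP => _ //; apply: ltnW.
    have hi' : ((if m == 2 :> nat then 1 else 2) < n)%N by case: ifP.
    apply: (key m (Ordinal hi) (Ordinal hi'));
      rewrite -(inj_eq val_inj) /=;
      case: m {hi hi'} => [[|[|[|m]]] Hm] //=.
  exists (x 0 ord0); apply/rowP => j; rewrite !mxE.
  case: (unliftP ord0 j) => [k ->|->]; last by rewrite eqxx mulr1.
  by rewrite Hu mulr0.
Qed.
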